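(* Let $\delta,\varepsilon\in[0,1)$, let $\mathscr{H}$ be a complex Hilbert space, let $\mathscr{A}$ be a $C^*$-algebra with $\mathbb{K}(\mathscr{H})\subseteq\mathscr{A}\subseteq\mathbb{B}(\mathscr{H})$, let $\mathscr{E},\mathscr{F}$ be inner product $\mathscr{A}$-modules, and let $e=\eta\otimes\eta$ be a minimal projection ($\eta\in\mathscr{H}$ a unit vector). Then: (i) $x,y\in\mathscr{E}_e$ are $\delta$-orthogonal in the inner product space $\mathscr{E}_e$ if and only if they are $\delta$-orthogonal in $\mathscr{E}$; (ii) if $T:\mathscr{E}\to\mathscr{F}$ is an $\mathscr{A}$-linear $(\delta,\varepsilon)$-orthogonality preserving mapping, then $T$ maps $\mathscr{E}_e$ into $\mathscr{F}_e$ and its restriction $T_e:\mathscr{E}_e\to\mathscr{F}_e$ is a linear $(\delta,\varepsilon)$-orthogonality preserving mapping between inner product spaces.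
   Context: An inner product $\mathscr{A}$-module is a right $\mathscr{A}$-module with an $\mathscr{A}$-valued inner product $\langle\cdot,\cdot\rangle$ ($\mathbb{C}$-linear and $\mathscr{A}$-linear in the second variable, $\langle x,y\rangle^*=\langle y,x\rangle$, $\langle x,x\rangle\geq0$ with equality iff $x=0$), with norm $\|x\|=\|\langle x,x\rangle\|^{1/2}$. A map is $\mathscr{A}$-linear if it is linear and $T(xa)=(Tx)a$. For $\eta,\zeta\in\mathscr{H}$, $\eta\otimes\zeta$ is the rank-one operator $\xi\mapsto(\xi,\zeta)\eta$. For a minimal projection $e=\eta\otimes\eta$, $\mathscr{E}_e=\{xe:x\in\mathscr{E}\}$ is a complex inner product space with inner product $(x,y)=\mathrm{tr}(\langle x,y\rangle)$; one has $\langle x,y\rangle=(x,y)e$ for $x,y\in\mathscr{E}_e$. In an inner product space, $x,y$ are $\delta$-orthogonal if $|(x,y)|\leq\delta\|x\|\|y\|$; in $\mathscr{E}$, if $\|\langle x,y\rangle\|\leq\delta\|x\|\|y\|$. A map is $(\delta,\varepsilon)$-orthogonality preserving if $\delta$-orthogonal pairs are mapped to $\varepsilon$-orthogonal pairs. *)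

(* Defs.v *)
From mathcomp Require Import all_boot all_order all_algebra.
From mathcomp Require Import complex.
From mathcomp Require Import boolp classical_sets reals.

Set Implicit Arguments.
Unset Strict Implicit.
Unset Printing Implicit Defensive.

Import Order.TTheory GRing.Theory Num.Theory.
Local Open Scope ring_scope.
Local Open Scope classical_set_scope.

Section Defs.
Variable R : realType.
Local Notation C := (R[i]).

(* linear in the first variable, conjugate-linear in the second        *)
(* (so that (eta (x) zeta) xi = (xi, zeta) eta as in the paper).       *)
Variable H : lmodType C.
Variable ip : H -> H -> C.

Definition hnorm (xi : H) : R := Num.sqrt (complex.Re (ip xi xi)).

Definition hcauchy (u : nat -> H) : Prop :=
  forall e : R, 0 < e -> exists N : nat, forall m n : nat,
    (N <= m)%N -> (N <= n)%N -> hnorm (u m - u n) < e.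

Definition hconverges (u : nat -> H) (l : H) : Prop :=
  forall e : R, 0 < e -> exists N : nat, forall n : nat,
    (N <= n)%N -> hnorm (u n - l) < e.

Definition is_hilbert : Prop :=
  (((forall (a : C) (x y z : H), ip (a *: x + y) z = a * ip x z + ip y z)) /\ ((forall x y : H, ip x y = (ip y x)^*)) /\ ((forall x : H, 0 <= ip x x)) /\ ((forall x : H, ip x x = 0 -> x = 0)) /\ ((forall u : nat -> H, hcauchy u -> exists l, hconverges u l))).

Definition op_linear (T : H -> H) : Prop :=
  forall (a : C) (x y : H), T (a *: x + y) = a *: T x + T y.

Definition op_bounded (T : H -> H) : Prop :=
  exists M : R, forall x : H, hnorm (T x) <= M * hnorm x.

Definition bounded_op (T : H -> H) : Prop := op_linear T /\ op_bounded T.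

Definition opnorm (T : H -> H) : R :=
  sup [set hnorm (T x) | x in [set x : H | hnorm x <= 1]].

Definition is_adjoint (T S : H -> H) : Prop :=
  forall x y : H, ip (T x) y = ip x (S y).

(* compact operators K(H): bounded linear operators mapping bounded
   sequences to sequences having a Cauchy (hence, H being complete,
   convergent) subsequence, i.e. the image of the unit ball is
   relatively compact. *)
Definition compact_op (T : H -> H) : Prop :=
  bounded_op T /\
  forall u : nat -> H, (exists M : R, forall n, hnorm (u n) <= M) ->
    exists phi : nat -> nat, (forall n, (phi n < phi n.+1)%N) /\
      hcauchy (fun n => T (u (phi n))).

Definition is_Cstar_subalg (A : set (H -> H)) : Prop :=
  (((forall a, A a -> bounded_op a)) /\ (A (fun _ => 0)) /\ ((forall a b, A a -> A b -> A (fun x => a x + b x))) /\ ((forall (c : C) a, A a -> A (fun x => c *: a x))) /\ ((forall a b, A a -> A b -> A (a \o b))) /\ ((forall a, A a -> exists2 b, A b & is_adjoint a b)) /\ ((forall (u : nat -> (H -> H)) (T : H -> H),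
         (forall n, A (u n)) -> bounded_op T ->
         (forall e : R, 0 < e -> exists N : nat, forall n : nat,
              (N <= n)%N -> opnorm (fun x => u n x - T x) < e) ->
         A T))).

Definition op_pos (a : H -> H) : Prop := forall x : H, 0 <= ip (a x) x.

Definition rank_one (eta zeta : H) : H -> H := fun xi => ip xi zeta *: eta.

(* E is a complex vector space with a right action of A, act x a = xa *)
Definition is_ip_module (A : set (H -> H)) (E : lmodType C)
    (act : E -> (H -> H) -> E) (ipE : E -> E -> (H -> H)) : Prop :=
  ((
      (forall (x y : E) a, A a -> act (x + y) a = act x a + act y a)) /\ ((forall (x : E) a b, A a -> A b ->
          act x (fun h => a h + b h) = act x a + act x b)) /\ ((forall (x : E) a b, A a -> A b -> act x (a \o b) = act (act x a) b)) /\ ((forall (c : C) (x : E) a, A a ->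
          act (c *: x) a = c *: act x a /\ act x (fun h => c *: a h) = c *: act x a)) /\ (
      (forall x y : E, A (ipE x y))) /\ (
      (forall (c : C) (x y z : E),
          ipE x (c *: y + z) = (fun h => c *: ipE x y h + ipE x z h))) /\ (
      (forall (x y : E) a, A a -> ipE x (act y a) = ipE x y \o a)) /\ (
      (forall x y : E, is_adjoint (ipE x y) (ipE y x))) /\ (
      (forall x : E, op_pos (ipE x x) /\ (ipE x x = (fun _ => 0) -> x = 0)))).

Definition mnorm (E : lmodType C) (ipE : E -> E -> (H -> H)) (x : E) : R :=
  Num.sqrt (opnorm (ipE x x)).

Definition morth (E : lmodType C) (ipE : E -> E -> (H -> H))
    (delta : R) (x y : E) : Prop :=
  opnorm (ipE x y) <= delta * mnorm ipE x * mnorm ipE y.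

Definition Ee (E : lmodType C) (act : E -> (H -> H) -> E) (e : H -> H) : set E :=
  [set y | exists x : E, y = act x e].

(* the inner product (x, y) = tr(<x, y>) on E_e, e = eta (x) eta with eta a
   unit vector; for x, y in E_e, <x,y> = (x,y) e, and the trace of the
   operator c e is c = ((c e) eta, eta).  *)
Definition ipe (E : lmodType C) (ipE : E -> E -> (H -> H)) (eta : H)
    (x y : E) : C := ip (ipE x y eta) eta.

Definition enorm (E : lmodType C) (ipE : E -> E -> (H -> H)) (eta : H) (x : E) : R :=
  Num.sqrt (complex.Re (ipe ipE eta x x)).

Definition eorth (E : lmodType C) (ipE : E -> E -> (H -> H)) (eta : H)
    (delta : R) (x y : E) : Prop :=
  `|ipe ipE eta x y| <= ((delta * enorm ipE eta x * enorm ipE eta y)%:C)%C.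

Definition Alinear (A : set (H -> H)) (E F : lmodType C)
    (actE : E -> (H -> H) -> E) (actF : F -> (H -> H) -> F) (T : E -> F) : Prop :=
  (forall (c : C) (x y : E), T (c *: x + y) = c *: T x + T y) /\
  (forall (x : E) a, A a -> T (actE x a) = actF (T x) a).

End Defs.

(* Main.v *)
Require Import Defs.
From mathcomp Require Import all_boot all_order all_algebra.
From mathcomp Require Import complex.
From mathcomp Require Import boolp classical_sets reals.
From mathcomp Require Import topology normedtype sequences.
From mathcomp Require Import ring lra.
Import Order.TTheory GRing.Theory Num.Theory.
Set Implicit Arguments.
Unset Strict Implicit.
Unset Printing Implicit Defensive.
Local Open Scope ring_scope.
Local Open Scope classical_set_scope.
Import numFieldNormedType.Exports.

Section Cx.
Variable R : realType.
Definition nc (z : R[i]) : R := complex.Re `|z|.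
Lemma ncE z : `|z| = (nc z)%:C%C.
Proof. by rewrite /nc normc_def. Qed.
Lemma nc_ge0 z : 0 <= nc z.
Proof. by rewrite /nc normc_def /= sqrtr_ge0. Qed.
Lemma nc_sqr z : nc z ^+ 2 = complex.Re z ^+ 2 + complex.Im z ^+ 2.
Proof. by rewrite /nc normc_def /= sqr_sqrtr // addr_ge0 // sqr_ge0. Qed.
Lemma rcM (a b : R) : (a%:C * b%:C = (a * b)%:C)%C.
Proof. by apply/eqP; rewrite eq_complex /= !mulr0 mul0r subr0 addr0 !eqxx. Qed.
Lemma ncM x y : nc (x * y) = nc x * nc y.
Proof. by rewrite {1}/nc normrM !ncE rcM. Qed.
Lemma nc_sqrC z : `|z| ^+ 2 = ((nc z) ^+ 2)%:C%C.
Proof. by rewrite ncE expr2 rcM -expr2. Qed.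
Lemma nc_le z : nc z <= `|complex.Re z| + `|complex.Im z|.
Proof.
rewrite -(ler_pXn2r (n:=2)) ?nn0 //; first last.
- by rewrite nnegrE addr_ge0.
- by rewrite nnegrE nc_ge0.
rewrite nc_sqr sqrrD !real_normK ?num_real // -addrA lerD2l.
rewrite lerDr. by rewrite mulrn_wge0 // mulr_ge0.
Qed.
Lemma nc_ge0E z : 0 <= z -> nc z = complex.Re z.
Proof.
move=> /[dup] /ger0_Im hI; rewrite lecE /= hI => /andP [_ h].
by rewrite /nc normc_def /= hI expr0n /= addr0 sqrtr_sqr ger0_norm.
Qed.
Lemma lecR' (a b : R) : ((a%:C <= b%:C) = (a <= b))%C.
Proof. exact: lecR. Qed.
Lemma ncR (a : R) : 0 <= a -> nc (a%:C)%C = a.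
Proof. by move=> h; rewrite nc_ge0E // lecR. Qed.

Lemma Re_le_nc (z : R[i]) : `|complex.Re z| <= nc z.
Proof.
rewrite /nc normc_def /= -sqrtr_sqr ler_sqrt ?addr_ge0 ?sqr_ge0 //.
by rewrite lerDl sqr_ge0.
Qed.
Lemma Im_le_nc (z : R[i]) : `|complex.Im z| <= nc z.
Proof.
rewrite /nc normc_def /= -sqrtr_sqr ler_sqrt ?addr_ge0 ?sqr_ge0 //.
by rewrite lerDr sqr_ge0.
Qed.
Lemma ReB (a b : R[i]) : complex.Re (a - b) = complex.Re a - complex.Re b.
Proof. by case: a => ? ?; case: b. Qed.
Lemma ImB (a b : R[i]) : complex.Im (a - b) = complex.Im a - complex.Im b.
Proof. by case: a => ? ?; case: b. Qed.

Lemma bounded_by (M : R) (v : nat -> R) : (forall n, `|v n| <= M) -> bounded_fun v.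
Proof.
move=> hv; rewrite /bounded_near; near=> K => n _ /=.
rewrite (le_trans (hv n)) //; near: K; apply: nbhs_pinfty_ge.
by rewrite num_real.
Unshelve. all: end_near. Qed.

Lemma tri_half (l a b ep : R) : `|l - a| < ep / 2 -> `|l - b| < ep / 2 -> `|a - b| < ep.
Proof.
move=> h1 h2; rewrite (splitr ep); apply: le_lt_trans (ltrD h1 h2).
have -> : a - b = - (l - a) + (l - b) by ring.
by rewrite (le_trans (ler_normD _ _)) // normrN.
Qed.

Lemma real_cauchy (v : nat -> R) : cvgn v -> forall ep : R, 0 < ep ->
  exists N, forall m n, (N <= m)%N -> (N <= n)%N -> `|v m - v n| < ep.
Proof.
move=> cv ep ep0.
have ep2 : 0 < ep / 2 by rewrite divr_gt0.
have := (cvgrPdist_lt _ _).1 cv _ ep2 => -[N _ hN].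
exists N => m n hm hn.
have := hN m hm; have := hN n hn => /= h1 h2.
exact: tri_half h2 h1.
Qed.

Lemma incr_lt (f : nat -> nat) : increasing_seq f -> forall n m, (n < m)%N -> (f n < f m)%N.
Proof.
move=> hf n m; rewrite !ltnNge => h; apply/negP => h'.
have := hf m n; rewrite leEnat h' => /esym hmn. by rewrite hmn in h.
Qed.

Lemma incr_ge (f : nat -> nat) : increasing_seq f -> forall n, (n <= f n)%N.
Proof.
move=> hf; elim=> // n ih; apply: leq_ltn_trans ih _; exact: incr_lt hf _ _ (ltnSn n).
Qed.
End Cx.

Section Hilb.
Variable R : realType.
Variable H : lmodType R[i].
Variable ip : H -> H -> R[i].
Hypothesis ipDZl : forall (a : R[i]) (x y z : H), ip (a *: x + y) z = a * ip x z + ip y z.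
Hypothesis ipC : forall x y : H, ip x y = (ip y x)^*.
Hypothesis ip_ge0 : forall x : H, 0 <= ip x x.
Hypothesis ip_eq0 : forall x : H, ip x x = 0 -> x = 0.

Lemma ip0l z : ip 0 z = 0.
Proof.
have := ipDZl 1 0 0 z; rewrite scale1r addr0 mul1r.
by move=> /(congr1 (fun t => t - ip 0 z)); rewrite subrr addrK => /esym.
Qed.

Lemma ipZl a x z : ip (a *: x) z = a * ip x z.
Proof. by have := ipDZl a x 0 z; rewrite addr0 ip0l addr0. Qed.

Lemma ipDl x y z : ip (x + y) z = ip x z + ip y z.
Proof. by have := ipDZl 1 x y z; rewrite scale1r mul1r. Qed.

Lemma ipNl x z : ip (- x) z = - ip x z.
Proof. by rewrite -scaleN1r ipZl mulN1r. Qed.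

Lemma ipBl x y z : ip (x - y) z = ip x z - ip y z.
Proof. by rewrite ipDl ipNl. Qed.

Lemma ipZr a x z : ip z (a *: x) = a^* * ip z x.
Proof. by rewrite ipC ipZl rmorphM /= -ipC. Qed.

Lemma ipDr x y z : ip z (x + y) = ip z x + ip z y.
Proof. by rewrite ipC ipDl rmorphD /= -!ipC. Qed.

Lemma ipBr x y z : ip z (x - y) = ip z x - ip z y.
Proof. by rewrite -scaleN1r ipDr ipZr rmorphN rmorph1 mulN1r. Qed.

Lemma ip0r z : ip z 0 = 0.
Proof. by rewrite ipC ip0l rmorph0. Qed.

Lemma ip_nondeg v : (forall z, ip v z = 0) -> v = 0.
Proof. by move=> h; apply: ip_eq0; apply: h. Qed.


Variable eta : H.
Hypothesis heta : hnorm ip eta = 1.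

Lemma ip_eta : ip eta eta = 1.
Proof.
have g := ip_ge0 eta; have hI := ger0_Im g.
move: g; rewrite lecE /= => /andP [_ g].
move: heta; rewrite /hnorm => h.
have hR : complex.Re (ip eta eta) = 1.
  by rewrite -(sqr_sqrtr g) h expr1n.
by apply/eqP; rewrite eq_complex hR hI /= !eqxx.
Qed.

Lemma hnormZ a : hnorm ip (a *: eta) = nc a.
Proof.
rewrite /hnorm ipZl ipZr ip_eta mulr1 -sqr_normc nc_sqrC /=.
by rewrite sqrtr_sqr ger0_norm // nc_ge0.
Qed.

Lemma CS xi : nc (ip xi eta) <= hnorm ip xi.
Proof.
set a := ip xi eta.
have h := ip_ge0 (xi - a *: eta).
rewrite ipBl !ipBr !ipZr !ipZl ip_eta mulr1 (ipC eta xi) -/a in h.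
have e1 : ip xi xi - a^* * a - (a * a^* - a^* * a) = ip xi xi - a * a^* by ring.
rewrite e1 -sqr_normc nc_sqrC in h.
have hxx := ip_ge0 xi.
move: h hxx; rewrite /hnorm; case: (ip xi xi) => p q.
rewrite !lecE /= => /andP [_ h1] /andP [_ h2].
rewrite subr_ge0 in h1.
rewrite -(ger0_norm (nc_ge0 a)) -sqrtr_sqr ler_sqrt //.
Qed.

Lemma e_apply xi : rank_one ip eta eta xi = ip xi eta *: eta.
Proof. by []. Qed.

Lemma e_lin : op_linear (rank_one ip eta eta).
Proof. by move=> a x y; rewrite !e_apply ipDl ipZl scalerDl scalerA. Qed.

Lemma e_bnd : op_bounded ip (rank_one ip eta eta).
Proof. by exists 1 => x; rewrite e_apply hnormZ mul1r CS. Qed.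


Lemma e_compact : compact_op ip (rank_one ip eta eta).
Proof.
split; first by split; [exact: e_lin | exact: e_bnd].
move=> u [M hM].
pose c n := ip (u n) eta.
have hb n : nc (c n) <= M := le_trans (CS _) (hM n).
have [f hf cf] : exists2 f : nat -> nat, increasing_seq f &
    cvgn ((fun n => complex.Re (c n)) \o f).
  apply: bolzano_weierstrass.
  have := @bounded_by R M (fun n => complex.Re (c n)) (fun n => le_trans (Re_le_nc _) (hb n)).
  exact.
have [g hg cg] : exists2 g : nat -> nat, increasing_seq g &
    cvgn ((fun n => complex.Im (c (f n))) \o g).
  apply: bolzano_weierstrass.
  have := @bounded_by R M (fun n => complex.Im (c (f n))) (fun n => le_trans (Im_le_nc _) (hb _)).
  exact.
exists (f \o g); split.
  move=> n /=; exact: (incr_lt hf (incr_lt hg (ltnSn n))).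
move=> ep ep0.
have ep2 : 0 < ep / 2 by rewrite divr_gt0.
have [N1 hN1] := real_cauchy cf ep2.
have [N2 hN2] := real_cauchy cg ep2.
exists (maxn N1 N2) => m n; rewrite !geq_max => /andP [m1 m2] /andP [n1 n2].
rewrite /= !e_apply -scalerBl hnormZ -/(c _) -/(c _).
apply: le_lt_trans (nc_le _) _.
rewrite (splitr ep) ltrD //.
- have := hN1 (g m) (g n) (leq_trans m1 (incr_ge hg m)) (leq_trans n1 (incr_ge hg n)).
  by rewrite /= ReB.
- have := hN2 m n m2 n2.
  by rewrite /= ImB.
Qed.

Section Mod.
Variable A : set (H -> H).
Hypothesis hAlin : forall a, A a -> op_linear a.
Hypothesis Ae : A (rank_one ip eta eta).
Variable M : lmodType R[i].
Variable act : M -> (H -> H) -> M.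
Variable ipM : M -> M -> (H -> H).
Hypothesis hM : is_ip_module ip A act ipM.

Local Notation e := (rank_one ip eta eta).

Lemma lin0 a : A a -> a 0 = 0.
Proof.
move=> /hAlin h; have := h 1 0 0; rewrite !scale1r addr0.
by move=> /(congr1 (fun t => t - a 0)); rewrite subrr addrK => /esym.
Qed.

Lemma linZ a c xi : A a -> a (c *: xi) = c *: a xi.
Proof.
move=> Aa; have := hAlin Aa c xi 0; rewrite addr0 (lin0 Aa) addr0; exact.
Qed.

Lemma ipM_e_ex x0 y0 : exists d, forall xi,
  ipM (act x0 e) (act y0 e) xi = (ip xi eta * d) *: eta.
Proof.
have [_ [_ [_ [_ [hA5 [_ [hA7 [hA8 _]]]]]]]] := hM.
set x := act x0 e.
set v := ipM x y0 eta.
set w := ipM y0 x0 eta.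
exists (ip eta w).
have hv : v = ip eta w *: eta.
  apply/eqP; rewrite -subr_eq0; apply/eqP; apply: ip_nondeg => z.
  rewrite ipBl ipZl.
  have -> : ip v z = ip eta (ipM y0 x z) by apply: hA8.
  rewrite /x hA7 //= e_apply (linZ _ _ (hA5 _ _)) ipZr -ipC -/w.
  by rewrite mulrC subrr.
move=> xi; rewrite hA7 //= e_apply (linZ _ _ (hA5 _ _)) -/v hv scalerA.
by [].
Qed.

Lemma ipM_e x y : Ee act e x -> Ee act e y -> forall xi,
  ipM x y xi = (ip xi eta * ipe ip ipM eta x y) *: eta.
Proof.
move=> [x0 ->] [y0 ->].
have [d hd] := ipM_e_ex x0 y0.
have -> : ipe ip ipM eta (act x0 e) (act y0 e) = d.
  by rewrite /ipe hd ipZl ip_eta !mul1r mulr1.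
exact: hd.
Qed.

Lemma opnorm_e d : opnorm ip (fun xi => (ip xi eta * d) *: eta) = nc d.
Proof.
rewrite /opnorm.
set S := [set _ | _ in _].
have hS : forall r, S r -> r <= nc d.
  move=> r [xi hxi <-]; rewrite hnormZ ncM.
  rewrite -[X in _ <= X]mul1r ler_wpM2r ?nc_ge0 //.
  exact: le_trans (CS _) hxi.
have Sd : S (nc d).
  by exists eta; [rewrite /= heta | rewrite hnormZ ip_eta mul1r].
apply/eqP; rewrite eq_le; apply/andP; split.
  by apply: ge_sup; [exists (nc d) | exact: hS].
apply: sup_upper_bound => //; split; first by exists (nc d).
by exists (nc d).
Qed.

Lemma ipe_ge0 x : 0 <= ipe ip ipM eta x x.
Proof. by have [_ [_ [_ [_ [_ [_ [_ [_ h]]]]]]]] := hM; have [h1 _] := h x; exact: h1. Qed.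

Lemma opnorm_ipM x y : Ee act e x -> Ee act e y ->
  opnorm ip (ipM x y) = nc (ipe ip ipM eta x y).
Proof.
move=> hx hy; rewrite -opnorm_e; congr opnorm.
by apply: funext => xi; rewrite ipM_e.
Qed.

Lemma mnorm_e x : Ee act e x -> mnorm ip ipM x = enorm ip ipM eta x.
Proof.
by move=> hx; rewrite /mnorm /enorm opnorm_ipM // nc_ge0E // ipe_ge0.
Qed.

Lemma orth_equiv delta x y : Ee act e x -> Ee act e y ->
  (eorth ip ipM eta delta x y <-> morth ip ipM delta x y).
Proof.
move=> hx hy; rewrite /eorth /morth opnorm_ipM // !mnorm_e // ncE lecR.
by [].
Qed.

End Mod.
End Hilb.

Theorem lemma3p4 (R : realType) (delta eps : R)
  (hdelta : 0 <= delta < 1) (heps : 0 <= eps < 1)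
  (H : lmodType R[i]) (ip : H -> H -> R[i]) (hH : is_hilbert ip)
  (A : set (H -> H)) (hA : is_Cstar_subalg ip A)
  (hKA : forall T : H -> H, compact_op ip T -> A T)
  (E : lmodType R[i]) (actE : E -> (H -> H) -> E) (ipE : E -> E -> (H -> H))
  (hE : is_ip_module ip A actE ipE)
  (F : lmodType R[i]) (actF : F -> (H -> H) -> F) (ipF : F -> F -> (H -> H))
  (hF : is_ip_module ip A actF ipF)
  (eta : H) (heta : hnorm ip eta = 1) :
  let e := rank_one ip eta eta in
  (* (i) *)
  (forall x y : E, Ee actE e x -> Ee actE e y ->
     (eorth ip ipE eta delta x y <-> morth ip ipE delta x y)) /\
  (* (ii) *)
  (forall T : E -> F, Alinear A actE actF T ->
     (forall x y : E, morth ip ipE delta x y -> morth ip ipF eps (T x) (T y)) ->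
     [/\ (forall x : E, Ee actE e x -> Ee actF e (T x)),
         (forall (c : R[i]) (x y : E), Ee actE e x -> Ee actE e y ->
            T (c *: x + y) = c *: T x + T y)
       & (forall x y : E, Ee actE e x -> Ee actE e y ->
            eorth ip ipE eta delta x y -> eorth ip ipF eta eps (T x) (T y))]).
Proof.
move=> e.
have [h1 [h2 [h3 [h4 _]]]] := hH.
have hAlin : forall a, A a -> op_linear a.
  by move=> a Aa; have [hb _] := hA; have [] := hb a Aa.
have Ae : A e by apply: hKA; exact: (e_compact h1 h2 h3 heta).
have eqE := orth_equiv h1 h2 h3 h4 heta hAlin Ae hE.
have eqF := orth_equiv h1 h2 h3 h4 heta hAlin Ae hF.
split; first by move=> x y hx hy; exact: eqE.
move=> T [TL TA] Torth.
have TEe : forall x, Ee actE e x -> Ee actF e (T x).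
  by move=> x [x0 ->]; exists (T x0); rewrite TA.
split => //.
move=> x y hx hy /(eqE _ _ _ hx hy) /Torth h.
by apply/(eqF _ _ _ (TEe _ hx) (TEe _ hy)).
Qed.
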